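(* For the class $\mathcal I_m$ of VCG auctions with bidder-specific reserves in $\{1/m,2/m,\dots,1\}$, the matrix $\Gamma^{\mathrm{VCG}}$ is $(2,1)$-admissible and implementable with complexity $m$ (with respect to learner actions $\mathcal I_m$, adversary actions = valuation profiles in $[0,1]^n$, and payoff $f(\vec r,\vec v)=\mathrm{Rev}(\vec r,\vec v)$).
   Context: Single-parameter setting: $n$ bidders, a family $\mathcal S\subseteq 2^{[n]}$ of feasible sets of bidders that can be served simultaneously, with $\emptyset\in\mathcal S$ and $\{i\}\in\mathcal S$ for every $i$. A valuation profile is $\vec v\in[0,1]^n$. A VCG auction with bidder-specific reserves $\vec r=(r_1,\dots,r_n)$: all bidders with $v_i<r_i$ are removed; if none remain nothing is allocated; otherwise a feasible set of remaining bidders maximizing $\sum v_i$ over served bidders is served, and each served bidder is charged the larger of $r_i$ and his VCG payment (the externality he imposes on the other remaining bidders, i.e., the maximum welfare of the others over feasible sets minus their welfare in the chosen allocation). $\mathrm{Rev}(\vec r,\vec v)$ is the total charge. $\mathcal I_m$ is the set of such auctions with every $r_i\in\{1/m,\dots,m/m\}$. $\Gamma^{\mathrm{VCG}}$ is the $|\mathcal I_m|\times n\lceil\log_2 m\rceil$ binary matrix whose entry in row $\vec r$ and column $j=(i-1)\lceil\log_2 m\rceil+\beta$ ($i\le n$, $1\le\beta\le\lceil\log_2 m\rceil$) is the $\beta$-th bit of the binary representation of the integer $mr_i$. A matrix $\Gamma$ (rows indexed by learner actions $x$) is $(\kappa,\delta)$-admissible if its rows are pairwise distinct, each column has at most $\kappa$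 distinct values, and distinct values in a column differ by at least $\delta$. It is implementable with complexity $M$ if for each column $j$ there is a finite set $S_j$ of pairs $(w,y)$ with weight $w\ge0$ and adversary action $y$, $|S_j|\le M$, such that $\Gamma_{xj}-\Gamma_{x'j}=\sum_{(w,y)\in S_j}w(f(x,y)-f(x',y))$ for all learner actions $x,x'$. *)

(* Defs.v *)
From HB Require Import structures.
From mathcomp Require Import all_boot all_order all_algebra.
From Stdlib Require Lists.List.
Set Implicit Arguments. Unset Strict Implicit. Unset Printing Implicit Defensive.
Import Order.TTheory GRing.Theory Num.Theory.
Local Open Scope ring_scope.

Section Auction.
Variables (R : realFieldType) (n : nat).

Definition welfare (v : 'I_n -> R) (T : {set 'I_n}) : R := \sum_(i in T) v i.

Definition remaining (r v : 'I_n -> R) : {set 'I_n} := [set i | r i <= v i].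

(* maximum welfare over feasible sets contained in A (set0 is feasible, so
   starting the max at 0 gives exactly the maximum) *)
Definition maxwelfare (S : {set {set 'I_n}}) (v : 'I_n -> R) (A : {set 'I_n}) : R :=
  \big[Num.max/0]_(T in S | T \subset A) welfare v T.

Definition is_alloc (S : {set {set 'I_n}})
    (alloc : ('I_n -> R) -> ('I_n -> R) -> {set 'I_n}) : Prop :=
  forall r v, [/\ alloc r v \in S, alloc r v \subset remaining r v &
    forall T, T \in S -> T \subset remaining r v -> welfare v T <= welfare v (alloc r v)].

Definition vcg_pay (S : {set {set 'I_n}})
    (alloc : ('I_n -> R) -> ('I_n -> R) -> {set 'I_n}) (r v : 'I_n -> R) (i : 'I_n) : R :=
  maxwelfare S v (remaining r v :\ i) - welfare v (alloc r v :\ i).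

Definition Rev (S : {set {set 'I_n}})
    (alloc : ('I_n -> R) -> ('I_n -> R) -> {set 'I_n}) (r v : 'I_n -> R) : R :=
  \sum_(i in alloc r v) Num.max (r i) (vcg_pay S alloc r v i).

(* learner actions of I_m: x i : 'I_m encodes reserve r_i = (x i + 1)/m *)
Definition reserve (m : nat) (x : {ffun 'I_n -> 'I_m}) : 'I_n -> R :=
  fun i => (x i).+1%:R / m%:R.

Definition valprofile (v : 'I_n -> R) : Prop := forall i, 0 <= v i <= 1.

End Auction.

(* Column (i, beta) with beta : 'I_(up_log 2 m), i.e. beta+1 in
   {1..ceil(log2 m)}, corresponds to j = (i-1) ceil(log2 m) + (beta+1); the entry
   is bit beta (least significant = bit 0) of the integer m r_i = x i + 1. *)
Definition GammaVCG (R : realFieldType) (n m : nat)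
    (x : {ffun 'I_n -> 'I_m}) (j : 'I_n * 'I_(up_log 2 m)) : R :=
  (odd ((x j.1).+1 %/ 2 ^ j.2))%:R.

Definition admissible (R : realFieldType) (X C : finType) (G : X -> C -> R)
    (kappa : nat) (delta : R) : Prop :=
  [/\ forall x x', (forall j, G x j = G x' j) -> x = x',
      forall j, (size (undup [seq G x j | x <- enum X]) <= kappa)%N &
      forall j x x', G x j != G x' j -> delta <= `|G x j - G x' j| ].

Definition implementable (R : realFieldType) (X C Y : Type) (adv : Y -> Prop)
    (f : X -> Y -> R) (G : X -> C -> R) (M : nat) : Prop :=
  forall j : C, exists s : seq (R * Y),
    [/\ (size s <= M)%N,
        forall p, Stdlib.Lists.List.In p s -> 0 <= p.1 /\ adv p.2 &
        forall x x', G x j - G x' j = \sum_(p <- s) p.1 * (f x p.2 - f x' p.2)].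

(* Main.v *)
Require Import Defs.
From HB Require Import structures.
From mathcomp Require Import all_boot all_order all_algebra.
From mathcomp Require Import ring lra zify.
Import Order.TTheory GRing.Theory Num.Theory.

Lemma bits_mod (k a b : nat) :
  (forall beta, (beta < k)%N -> odd (a %/ 2 ^ beta) = odd (b %/ 2 ^ beta)) ->
  a %% 2 ^ k = b %% 2 ^ k.
Proof.
elim: k a b => [|k IH] a b H; first by rewrite expn0 !modn1.
have H0 := H 0%N isT; rewrite expn0 !divn1 in H0.
have H1 : (a %/ 2) %% 2 ^ k = (b %/ 2) %% 2 ^ k.
  apply: IH => beta hb; rewrite -!divnMA -expnS; exact: H.
have E : forall c, c %% 2 ^ k.+1 = odd c + 2 * ((c %/ 2) %% 2 ^ k).
  move=> c; rewrite expnS.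
  have : (0 < 2 ^ k)%N by rewrite expn_gt0.
  set P := 2 ^ k => P0.
  rewrite -modn2.
  have e1 := divn_eq c 2. have e2 := divn_eq (c %/ 2) P.
  have l1 : c %% 2 < 2 by rewrite ltn_mod.
  have l2 : (c %/ 2) %% P < P by rewrite ltn_mod.
  set q := c %/ 2 %/ P in e2. set s := c %/ 2 %% P in e2 l2 *.
  set t := c %/ 2 in e1 e2. set r := c %% 2 in e1 l1 *.
  have -> : c = q * (2 * P) + (r + 2 * s).
    rewrite e1 e2; lia.
  rewrite modnMDl modn_small //. nia.
by rewrite !E H0 H1.
Qed.

Lemma bits_inj (k a b : nat) : (0 < a <= 2 ^ k)%N -> (0 < b <= 2 ^ k)%N ->
  (forall beta, (beta < k)%N -> odd (a %/ 2 ^ beta) = odd (b %/ 2 ^ beta)) ->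
  a = b.
Proof.
move=> /andP[a0 ak] /andP[b0 bk] /bits_mod.
case: (ltngtP a (2 ^ k)) ak => // [ha|ha] _; case: (ltngtP b (2 ^ k)) bk => // hb _.
- by rewrite !modn_small.
- by rewrite hb modnn modn_small // => E; rewrite E in a0.
- by rewrite ha modnn (modn_small hb) => E; rewrite -E in b0.
- by rewrite ha hb.
Qed.

Lemma In_mem {T : eqType} {x : T} {s : seq T} : List.In x s -> x \in s.
Proof. elim: s => //= y s IH [->|/IH]; first by rewrite inE eqxx. by rewrite inE => ->; rewrite orbT. Qed.

Lemma In_map {A B : Type} {f : A -> B} {s : seq A} {y} :
  List.In y (map f s) -> exists x, List.In x s /\ y = f x.
Proof.
elim: s => //= a s IH [<-|/IH [x [H1 H2]]]; first by exists a; split; [left|].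
by exists x; split; [right|].
Qed.

Local Open Scope ring_scope.

Section Aux.
Variables (R : realFieldType) (n m : nat) (hm : (0 < m)%N)
    (S : {set {set 'I_n}}) (hS0 : set0 \in S) (hS1 : forall i, [set i] \in S)
    (alloc : ('I_n -> R) -> ('I_n -> R) -> {set 'I_n})
    (halloc : is_alloc S alloc).

Definition vprof (i : 'I_n) (h : nat) : 'I_n -> R :=
  fun k => if k == i then h%:R / m%:R else 0.

Lemma mpos : 0 < (m%:R : R). Proof. by rewrite ltr0n. Qed.

Lemma rev_single (x : {ffun 'I_n -> 'I_m}) i h :
  Rev S alloc (reserve R x) (vprof i h) =
  if ((x i).+1 <= h)%N then (x i).+1%:R / m%:R else 0.
Proof.
have mp := mpos.
have Hrem : remaining (reserve R x) (vprof i h) =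
    if ((x i).+1 <= h)%N then [set i] else set0.
  apply/setP => k; rewrite /remaining /reserve /vprof !inE.
  case: eqP => [->|ne].
    rewrite ler_pM2r ?invr_gt0 // ler_nat.
    by case: ifP; rewrite ?inE ?eqxx.
  have : 0 < (x k).+1%:R / (m%:R : R) by rewrite divr_gt0 // ltr0n.
  rewrite ltNge => /negbTE ->; case: ifP; rewrite ?inE //.
  by move/eqP: ne => /negbTE.
have [A1 A2 A3] := halloc (reserve R x) (vprof i h).
rewrite Hrem in A2 A3.
rewrite /Rev.
case: ifP Hrem A2 A3 => ha Hrem A2 A3; last first.
  by move: A2; rewrite subset0 => /eqP ->; rewrite big_set0.
have hpos : 0 < h%:R / (m%:R : R).
  by rewrite divr_gt0 // ltr0n; apply: leq_trans ha.
have Ea : alloc (reserve R x) (vprof i h) = [set i].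
  move: A2; rewrite subset1 => /orP[/eqP //|/eqP E].
  have := A3 [set i] (hS1 i) (subxx _).
  rewrite E /welfare big_set0 big_set1 /vprof eqxx.
  by rewrite leNgt hpos.
rewrite Ea big_set1 /vcg_pay Hrem Ea setDv /welfare big_set0.
have -> : maxwelfare S (vprof i h) set0 = 0.
  rewrite /maxwelfare; apply: (big_ind (fun y => y = 0)) => //.
    by move=> y z -> ->; rewrite maxxx.
  move=> T /andP[_]; rewrite subset0 => /eqP ->; exact: big_set0.
rewrite subr0 /reserve; apply/max_idPl.
by rewrite divr_ge0 // ltW.
Qed.

End Aux.
Definition Wf {R : realFieldType} (m : nat) (g : nat -> R) (k : nat) : R :=
  if (k <= m)%N then m%:R * (g k + m%:R) / k%:R else 0.

Lemma tele (R : realFieldType) (m : nat) (hm : (0 < m)%N) (g : nat -> R) (a : nat)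
  (ha : (0 < a <= m)%N) :
  \sum_(1 <= h < m.+1) (Wf m g h - Wf m g h.+1) *
     (if (a <= h)%N then a%:R / m%:R else 0) = g a + m%:R.
Proof.
case/andP: ha => a0 am.
rewrite (big_cat_nat _ (n:=a)) //=; last by apply: leqW.
rewrite big_nat_cond big1 ?add0r; last first.
  by move=> h /andP[/andP[_ hlt] _]; rewrite leqNgt hlt mulr0.
rewrite (eq_big_nat _ _ (F2 := fun h => (Wf m g h - Wf m g h.+1) * (a%:R / m%:R))); last first.
  by move=> h /andP[-> _].
rewrite -big_distrl /=.
rewrite (@telescope_sumr_eq _ _ _ (fun k => - Wf m g k)); last 2 first.
- exact: leqW.
- by move=> k _; rewrite opprK addrC.
rewrite /Wf ltnn am opprK oppr0 add0r.
have a0' : (a%:R : R) != 0 by rewrite pnatr_eq0 -lt0n.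
have m0' : (m%:R : R) != 0 by rewrite pnatr_eq0 -lt0n.
by rewrite [_ / m%:R]mulrC mulrA mulrAC divfK // mulrAC divff // mul1r.
Qed.

Lemma Wf_dec (R : realFieldType) (m : nat) (hm : (0 < m)%N) (g : nat -> R)
  (hg : forall k, 0 <= g k <= 1) h : (0 < h <= m)%N ->
  0 <= Wf m g h - Wf m g h.+1.
Proof.
case/andP=> h0 hm'; rewrite subr_ge0 /Wf hm'.
have [g1 g2] := andP (hg h); have [g3 g4] := andP (hg h.+1).
have hp : 0 < (h%:R : R) by rewrite ltr0n.
have mp : 0 <= (m%:R : R) by rewrite ler0n.
case: ifP => hm2; last by rewrite divr_ge0 // mulr_ge0 // addr_ge0.
rewrite ler_pdivrMr ?ltr0n // mulrAC ler_pdivlMr //.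
rewrite -!mulrA ler_wpM2l //.
have : (h%:R : R) <= m%:R by rewrite ler_nat ltnW.
rewrite -natr1.
nra.
Qed.

Theorem lemma3p1 (R : realFieldType) (n m : nat) (hm : (0 < m)%N)
    (S : {set {set 'I_n}}) (hS0 : set0 \in S) (hS1 : forall i, [set i] \in S)
    (alloc : ('I_n -> R) -> ('I_n -> R) -> {set 'I_n})
    (halloc : is_alloc S alloc) :
  admissible (@GammaVCG R n m) 2 1 /\
  implementable (@valprofile R n)
    (fun x v => Rev S alloc (reserve R x) v) (@GammaVCG R n m) m.
Proof.
split.
  split.
  - move=> x x' H; apply/ffunP => i; apply: val_inj.
    have hk : (m <= 2 ^ up_log 2 m)%N by apply: up_logP.
    apply: succn_inj; apply: (@bits_inj (up_log 2 m)).
    + by rewrite /= (leq_trans (ltn_ord _)).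
    + by rewrite /= (leq_trans (ltn_ord _)).
    move=> beta hb; have := H (i, Ordinal hb); rewrite /GammaVCG /=.
    by case: odd; case: odd => // /eqP; rewrite eqr_nat.
  - move=> j; apply: (@leq_trans (size [:: (0 : R); 1])); last by [].
    apply: uniq_leq_size; first exact: undup_uniq.
    move=> y; rewrite mem_undup => /mapP[x _ ->]; rewrite /GammaVCG !inE.
    by case: odd; rewrite ?eqxx ?orbT.
  - move=> j x x'; rewrite /GammaVCG.
    by case: odd; case: odd; rewrite ?eqxx // ?subr0 ?sub0r ?normrN ?normr1.
move=> [i beta].
pose g := fun a : nat => ((odd (a %/ 2 ^ beta))%:R : R).
have hg : forall k, 0 <= g k <= 1.
  by move=> k; rewrite /g; case: odd; rewrite ?lexx ?ler01.
exists [seq (Wf m g h - Wf m g h.+1, @vprof R n m i h) | h <- index_iota 1 m.+1].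
split.
- by rewrite size_map size_iota subSS subn0.
- move=> p Hp; have [h [hin ->]] := In_map Hp; have {}hin := In_mem hin; rewrite /=; rewrite mem_index_iota in hin; split.
    by apply: Wf_dec.
  move=> k; rewrite /vprof; case: eqP => _; last by rewrite lexx ler01.
  have mp : 0 < (m%:R : R) by rewrite ltr0n.
  case/andP: hin => _ hin.
  apply/andP; split; first by rewrite divr_ge0 ?ler0n ?ltW.
  by rewrite ler_pdivrMr // mul1r ler_nat.
move=> x x'.
have -> : forall y, @GammaVCG R n m y (i, beta) = g (y i).+1 by [].
rewrite big_map /=.
under eq_bigr do rewrite !(@rev_single R n m hm S hS1 alloc halloc) mulrBr.
rewrite sumrB !tele //.
- by rewrite opprD addrACA subrr addr0.
- by rewrite /= ltn_ord.
- by rewrite /= ltn_ord.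
Qed.
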